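(* Let $e_1,\dots,e_T\in\mathbb{R}^d$, $E=[e_1,\dots,e_T]$, $T_0\in\{2,\dots,T\}$, and let $C=\operatorname{conv}\{e_t:t\in\{2,\dots,T\}\setminus\{T_0\}\}$ and $\gamma=\operatorname{dist}(e_{T_0},C)$. For any attention vector $a\in\mathbb{R}^T$ with $a_1=0$, $a_t\ge0$, $\sum_t a_t=1$ (in particular for $a=a(w)$ the shifted-softmax attention of any parameter $w$), let $r=Ea-e_{T_0}$. Then there exists a constant $K>0$ (independent of $a$) such that $$(1-a_{T_0})K\ge\|r\|\ge(1-a_{T_0})\gamma.$$ In particular, if $\gamma>0$ then along any family of parameters the per-sample squared error $\frac12\|r\|^2$ tends to $0$ if and only if $a_{T_0}\to1$, and the squared loss has no finite-norm minimizer achieving zero loss.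
   Context: The shifted-softmax attention of a parameter $w$ is $a_1(w)=0$, $a_{t+1}(w)=\exp(w^\top x_t)/\sum_{s=1}^{T-1}\exp(w^\top x_s)$ for $t=1,\dots,T-1$, where $x_t$ are fixed feature vectors; such attention vectors always have $a_{T_0}<1$. *)

(* Defs.v *)
From HB Require Import structures.
From mathcomp Require Import all_boot all_order all_algebra.
From mathcomp Require Import all_classical all_reals all_analysis.
Set Implicit Arguments. Unset Strict Implicit. Unset Printing Implicit Defensive.
Import Order.TTheory GRing.Theory Num.Theory.
Local Open Scope classical_set_scope.
Local Open Scope ring_scope.

(* Indices are 0-based: paper index t in {1..T} is the ordinal t-1 : 'I_T.
   So the paper's a_1 is [a ord0]-like index 0, and T0 in {2..T} is an
   ordinal t0 with 0 < t0. *)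

Definition dotv (R : realType) (n : nat) (u v : 'rV[R]_n) : R :=
  \sum_(i < n) u ord0 i * v ord0 i.
Definition enorm (R : realType) (n : nat) (u : 'rV[R]_n) : R :=
  Num.sqrt (dotv u u).

Definition is_attention (R : realType) (T : nat) (a : 'I_T -> R) : Prop :=
  (forall t : 'I_T, nat_of_ord t = 0%N -> a t = 0) /\
  (forall t, 0 <= a t) /\ \sum_(t < T) a t = 1.

Definition Emul (R : realType) (d T : nat) (e : 'I_T -> 'rV[R]_d)
  (a : 'I_T -> R) : 'rV[R]_d := \sum_(t < T) a t *: e t.
Definition resid (R : realType) (d T : nat) (e : 'I_T -> 'rV[R]_d)
  (t0 : 'I_T) (a : 'I_T -> R) : 'rV[R]_d := Emul e a - e t0.

Definition hull_index (T : nat) (t0 : 'I_T) (t : 'I_T) : bool :=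
  (nat_of_ord t != 0%N) && (t != t0).

Definition convC (R : realType) (d T : nat) (e : 'I_T -> 'rV[R]_d)
  (t0 : 'I_T) : set 'rV[R]_d :=
  [set c | exists lam : 'I_T -> R,
     (forall t, 0 <= lam t) /\ (forall t, ~~ hull_index t0 t -> lam t = 0) /\
     \sum_(t < T) lam t = 1 /\ c = \sum_(t < T) lam t *: e t].

Definition gamma (R : realType) (d T : nat) (e : 'I_T -> 'rV[R]_d)
  (t0 : 'I_T) : R :=
  inf [set enorm (e t0 - c) | c in convC e t0].

(* Shifted-softmax attention: x : nat -> 'rV_p with x s (s = 0..T-2) the
   paper's x_{s+1}; a(w) at 0-based index 0 is 0, and at 0-based index
   t >= 1 equals exp(w.x_t)/sum_{s} exp(w.x_s) (paper index t+1). *)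
Definition softmax_att (R : realType) (p T : nat) (x : nat -> 'rV[R]_p)
  (w : 'rV[R]_p) (t : 'I_T) : R :=
  if nat_of_ord t == 0%N then 0
  else expR (dotv w (x (nat_of_ord t).-1)) /
       \sum_(s < T.-1) expR (dotv w (x (nat_of_ord s))).

Definition sqerr (R : realType) (d T : nat) (e : 'I_T -> 'rV[R]_d)
  (t0 : 'I_T) (a : 'I_T -> R) : R := (enorm (resid e t0 a)) ^+ 2 / 2.

(* Main.v *)
Require Import Defs.
From HB Require Import structures.
From mathcomp Require Import all_boot all_order all_algebra.
From mathcomp Require Import all_classical all_reals all_analysis.
From mathcomp Require Import ring lra.
Import Order.TTheory GRing.Theory Num.Theory numFieldNormedType.Exports.
Local Open Scope classical_set_scope.
Local Open Scope ring_scope.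

Lemma cvg_aux (R : realType) (f g v : nat -> R) (K gm : R) :
  0 < K -> 0 < gm -> (forall n, 0 <= 1 - g n) ->
  (forall n, v n <= (1 - g n) * K) -> (forall n, (1 - g n) * gm <= v n) ->
  (forall n, 0 <= v n) -> (forall n, f n = v n ^+ 2 / 2) ->
  (f @ \oo --> (0:R)) <-> (g @ \oo --> (1:R)).
Proof.
move=> K0 g0 u0 vK vg v0 fv; split => hf.
- have h2 : (fun n => 2 * f n) @ \oo --> (0:R).
    by rewrite -(mulr0 2); apply: cvgM => //; apply: cvg_cst.
  have hs := cvg_comp _ _ h2 (@sqrt_continuous R 0).
  rewrite sqrtr0 in hs.
  have hv : v @ \oo --> (0:R).
    suff -> : v = Num.sqrt \o (fun n => 2 * f n) by [].
    apply/funext => n /=; rewrite fv; have -> : 2 * (v n ^+ 2 / 2) = v n ^+ 2 by field.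
    by rewrite sqrtr_sqr ger0_norm.
  have hu : (fun n => 1 - g n) @ \oo --> (0:R).
    apply: (@squeeze_cvgr _ _ _ _ (fun=> 0) (fun n => v n * gm^-1)).
    + apply: nearW => n; apply/andP; split; first exact: u0.
      by rewrite ler_pdivlMr // vg.
    + exact: cvg_cst.
    + by rewrite -(mul0r gm^-1); apply: cvgM => //; apply: cvg_cst.
  have -> : g = (fun n => 1 - (1 - g n)) by apply/funext => n; ring.
  by rewrite -[X in _ --> X](subr0 1); apply: cvgB => //; apply: cvg_cst.
- have hu : (fun n => 1 - g n) @ \oo --> (0:R).
    by rewrite -(subrr 1); apply: cvgB => //; apply: cvg_cst.
  have hv : v @ \oo --> (0:R).
    apply: (@squeeze_cvgr _ _ _ _ (fun=> 0) (fun n => (1 - g n) * K)).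
    + by apply: nearW => n; apply/andP; split.
    + exact: cvg_cst.
    + by rewrite -(mul0r K); apply: cvgM => //; apply: cvg_cst.
  have -> : f = (fun n => v n * v n * 2^-1) by apply/funext => n; rewrite fv expr2.
  have -> : (0:R) = 0 * 0 * 2^-1 by rewrite !mul0r.
  by apply: cvgM; [apply: cvgM|apply: cvg_cst].
Qed.
Lemma le_sum1 (R : realType) n (F : 'I_n -> R) i :
  (forall j, 0 <= F j) -> F i <= \sum_(j < n) F j.
Proof.
move=> F0; rewrite (bigD1 i) //= lerDl; exact: sumr_ge0.
Qed.

Lemma enormZ (R : realType) d (k : R) (u : 'rV[R]_d) :
  enorm (k *: u) = `|k| * enorm u.
Proof.
rewrite /enorm /dotv.
have -> : \sum_(i < d) (k *: u) ord0 i * (k *: u) ord0 i =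
          k ^+ 2 * \sum_(i < d) u ord0 i * u ord0 i.
  rewrite mulr_sumr; apply: eq_bigr => i _; rewrite !mxE; ring.
by rewrite sqrtrM ?sqr_ge0 // sqrtr_sqr.
Qed.

Lemma enormN (R : realType) d (u : 'rV[R]_d) : enorm (- u) = enorm u.
Proof.
rewrite /enorm /dotv; congr Num.sqrt; apply: eq_bigr => i _; rewrite !mxE; ring.
Qed.

Lemma enorm_ge0 (R : realType) d (u : 'rV[R]_d) : 0 <= enorm u.
Proof. exact: sqrtr_ge0. Qed.

Lemma enorm_le (R : realType) d (u : 'rV[R]_d) (B : R) :
  0 <= B -> (forall i, `|u ord0 i| <= B) -> enorm u <= Num.sqrt d%:R * B.
Proof.
move=> B0 hB; rewrite /enorm /dotv.
have h : \sum_(i < d) u ord0 i * u ord0 i <= d%:R * B ^+ 2.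
  rewrite (_ : d%:R * B ^+ 2 = \sum_(i < d) B ^+ 2); last by rewrite sumr_const card_ord mulr_natl.
  apply: ler_sum => i _.
  rewrite expr2; apply: (le_trans (ler_norm _)); rewrite normrM.
  by apply: ler_pM => //; apply: normr_ge0.
apply: (le_trans (_ : _ <= Num.sqrt (d%:R * B ^+ 2))).
  by rewrite ler_sqrt // mulr_ge0 // sqr_ge0.
by rewrite sqrtrM // sqrtr_sqr ger0_norm.
Qed.

Lemma att_le1 (R : realType) T (a : 'I_T -> R) t : is_attention a -> a t <= 1.
Proof. by move=> [_ [a0 s1]]; rewrite -s1; apply: le_sum1. Qed.

Section Res.
Variables (R : realType) (d T : nat) (e : 'I_T -> 'rV[R]_d) (t0 : 'I_T) (a : 'I_T -> R).
Hypothesis ha : is_attention a.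
Let a' t := if t == t0 then 0 else a t.

Lemma sum_a' : \sum_(t < T) a' t = 1 - a t0.
Proof.
case: ha => [_ [_ s1]]; rewrite -s1 (bigD1 t0) //= (bigD1 t0 (P := predT)) //=.
rewrite /a' eqxx add0r addrC addrK; apply: eq_bigr => t /negPf -> //.
Qed.

Lemma resid_eq : resid e t0 a = \sum_(t < T) a' t *: (e t - e t0).
Proof.
case: ha => [_ [_ s1]].
rewrite /resid /Emul.
have -> : \sum_(t < T) a' t *: (e t - e t0) = \sum_(t < T) a t *: (e t - e t0).
  apply: eq_bigr => t _; rewrite /a'; case: eqP => [->|//].
  by rewrite subrr !scaler0.
rewrite [RHS](eq_bigr (fun t => a t *: e t - a t *: e t0)); last by move=> t _; rewrite scalerBr.
by rewrite sumrB -scaler_suml s1 scale1r.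
Qed.


Lemma a'_ge0 t : 0 <= a' t.
Proof. by case: ha => [_ [a0 _]]; rewrite /a'; case: eqP. Qed.

Definition Mc := \sum_(t < T) \sum_(j < d) `|e t ord0 j - e t0 ord0 j|.

Lemma Mc_ge0 : 0 <= Mc.
Proof. by apply: sumr_ge0 => t _; apply: sumr_ge0 => j _. Qed.

Lemma upper : enorm (resid e t0 a) <= (1 - a t0) * (1 + Num.sqrt d%:R * Mc).
Proof.
have a1 : 0 <= 1 - a t0 by rewrite subr_ge0 att_le1.
rewrite resid_eq; apply: (le_trans (@enorm_le _ _ _ ((1 - a t0) * Mc) _ _)).
- by apply: mulr_ge0 => //; apply: Mc_ge0.
2: have := sqrtr_ge0 (d%:R : R); have := Mc_ge0; nra.
move=> i; rewrite summxE -sum_a' mulr_suml.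
apply: (le_trans (ler_norm_sum _ _ _)); apply: ler_sum => t _.
rewrite !mxE normrM (ger0_norm (a'_ge0 t)); apply: ler_wpM2l; first exact: a'_ge0.
rewrite /Mc.
have H1 := @le_sum1 R _ (fun t => \sum_(j < d) `|e t ord0 j - e t0 ord0 j|) t (fun _ => sumr_ge0 _ (fun _ _ => normr_ge0 _)).
have H2 := @le_sum1 R _ (fun j => `|e t ord0 j - e t0 ord0 j|) i (fun _ => normr_ge0 _).
simpl in H1, H2; exact: le_trans H2 H1.
Qed.

Lemma lower : (1 - a t0) * gamma e t0 <= enorm (resid e t0 a).
Proof.
have a1 : 0 <= 1 - a t0 by rewrite subr_ge0 att_le1.
have [a0|a0] := eqVneq (a t0) 1.
  by rewrite a0 subrr mul0r; apply: enorm_ge0.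
have p : 0 < 1 - a t0 by rewrite lt0r a1 subr_eq0 eq_sym a0.
pose c := \sum_(t < T) (a' t / (1 - a t0)) *: e t.
have hr : resid e t0 a = (1 - a t0) *: (- (e t0 - c)).
  rewrite resid_eq opprB scalerBr /c scaler_sumr.
  rewrite (eq_bigr (fun t => a' t *: e t - a' t *: e t0)); last by move=> t _; rewrite scalerBr.
  rewrite sumrB -scaler_suml sum_a'; congr (_ - _); apply: eq_bigr => t _.
  by rewrite scalerA; congr (_ *: _); field; rewrite lt0r_neq0.
rewrite hr enormZ enormN (ger0_norm a1); apply: ler_wpM2l => //.
apply: ge_inf.
  by exists 0 => y [c' _ <-]; apply: enorm_ge0.
exists c => //; exists (fun t => a' t / (1 - a t0)); split.
  by move=> t; apply: divr_ge0 => //; apply: a'_ge0.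
split.
  move=> t; rewrite /hull_index negb_and !negbK => /orP [/eqP h|/eqP ->].
    by case: ha => [h0 _]; rewrite /a'; case: eqP => _; rewrite ?mul0r // h0 // mul0r.
  by rewrite /a' eqxx mul0r.
split => //; by rewrite -mulr_suml sum_a' divff // lt0r_neq0.
Qed.

End Res.

Lemma le_sum2 (R : realType) n (F : 'I_n -> R) i j :
  (forall k, 0 <= F k) -> j != i -> F i + F j <= \sum_(k < n) F k.
Proof.
move=> F0 ji; rewrite (bigD1 i) //= (bigD1 j) //= addrA lerDl.
by apply: sumr_ge0.
Qed.

Lemma softmax_is_att (R : realType) p T (x : nat -> 'rV[R]_p) w :
  (1 < T)%N -> is_attention (@softmax_att R p T x w).
Proof.
case: T => [|[|T']] // _; split; last split.
- by move=> t /= ht; rewrite /softmax_att ht.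
- move=> t; rewrite /softmax_att; case: eqP => // _.
  by apply: divr_ge0; [apply: expR_ge0|apply: sumr_ge0 => *; apply: expR_ge0].
- rewrite big_ord_recl /softmax_att /= add0r /=.
  have S0 : 0 < \sum_(s < T'.+1) expR (dotv w (x (nat_of_ord s))).
    by rewrite (bigD1 ord0) //= ltr_pwDl ?expR_gt0 //; apply: sumr_ge0 => *; apply: expR_ge0.
  rewrite -mulr_suml /= divff ?lt0r_neq0 //.
Qed.

Lemma softmax_pos (R : realType) p T (x : nat -> 'rV[R]_p) w (t : 'I_T) :
  (1 < T)%N -> nat_of_ord t != 0%N -> 0 < @softmax_att R p T x w t.
Proof.
case: T t => [|[|T']] t // _ ht; rewrite /softmax_att (negPf ht).
apply: divr_gt0; first exact: expR_gt0.
by rewrite (bigD1 ord0) //= ltr_pwDl ?expR_gt0 //; apply: sumr_ge0 => *; apply: expR_ge0.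
Qed.

Arguments softmax_is_att {R p T}.
Arguments softmax_pos {R p T}.
Arguments le_sum2 {R n F}.
Arguments upper {R d T} e t0 {a}.
Arguments lower {R d T} e t0 {a}.

Theorem lemma4 (R : realType) (d T : nat) (e : 'I_T -> 'rV[R]_d)
  (t0 : 'I_T) (ht0 : (0 < nat_of_ord t0)%N) :
  (exists K : R, 0 < K /\
     forall a : 'I_T -> R, is_attention a ->
       enorm (resid e t0 a) <= (1 - a t0) * K /\
       (1 - a t0) * gamma e t0 <= enorm (resid e t0 a)) /\
  (0 < gamma e t0 ->
   forall (p : nat) (x : nat -> 'rV[R]_p),
     (forall ws : nat -> 'rV[R]_p,
        ((fun n => sqerr e t0 (@softmax_att R p T x (ws n))) @ \oo --> (0 : R)) <->
        ((fun n => @softmax_att R p T x (ws n) t0) @ \oo --> (1 : R))) /\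
     (forall w : 'rV[R]_p, sqerr e t0 (@softmax_att R p T x w) <> 0)).
Proof.
have K0 : 0 < 1 + Num.sqrt d%:R * @Mc R d T e t0.
  by rewrite ltr_pwDl // mulr_ge0 ?sqrtr_ge0 ?Mc_ge0.
split.
  exists (1 + Num.sqrt d%:R * @Mc R d T e t0); split => // a ha; split.
  - exact: upper.
  - exact: lower.
move=> gpos p x.
have T1 : (1 < T)%N by apply: leq_ltn_trans ht0 (ltn_ord t0).
have [t1 ht1] : exists t1, hull_index t0 t1.
  case: (pselect (exists t1, hull_index t0 t1)) => [//|hn].
  have hC : Defs.convC e t0 = set0.
    apply/seteqP; split => // c [lam [_ [hz [s1 _]]]].
    have : \sum_(t < T) lam t = 0.
      apply: big1 => t _; apply: hz; apply/negP => h; apply: hn; by exists t.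
    by rewrite s1 => /eqP; rewrite oner_eq0.
  by move: gpos; rewrite /gamma hC image_set0 inf0 ltxx.
have lt1 : forall w, 1 - @softmax_att R p T x w t0 > 0.
  move=> w; have ha := softmax_is_att x w T1.
  case: (ha) => [_ [a0 s1]].
  move: ht1; rewrite /hull_index => /andP [h1 h2].
  have := le_sum2 t0 t1 a0 h2; rewrite s1.
  have := softmax_pos x w t1 T1 h1; lra.
split.
- move=> ws.
  apply: (@cvg_aux R _ _ (fun n => enorm (resid e t0 (softmax_att x (ws n))))
     (1 + Num.sqrt d%:R * @Mc R d T e t0) (gamma e t0)) => //.
  + by move=> n; apply: ltW.
  + by move=> n; apply: upper; apply: softmax_is_att.
  + by move=> n; apply: lower; apply: softmax_is_att.
  + by move=> n; apply: enorm_ge0.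
- move=> w; rewrite /sqerr.
  have hl := lower e t0 (softmax_is_att x w T1).
  have hp : 0 < enorm (resid e t0 (softmax_att x w)).
    by apply: lt_le_trans hl; apply: mulr_gt0.
  apply/eqP; rewrite mulf_eq0 invr_eq0 pnatr_eq0 orbF expf_eq0 /=.
  by rewrite gt_eqF.
Qed.
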